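(* Let $B\subseteq\mathbb{R}^n$ be a maximal lattice-free polyhedron with $m$ facets and let $c\in\operatorname{int}(B)$. Let $z_1,\dots,z_m\in\mathbb{Z}^n$ be integer points lying in the relative interiors of the $m$ distinct facets of $B$ (one in each). Then there exists $\epsilon\in(0,1)$ such that for all $i,j\in[m]$ with $i\ne j$, the segment $[z_i,z_j]$ has nonempty intersection with $(1-\epsilon)B+\epsilon c$.
   Context: A set $B\subseteq\mathbb{R}^n$ is lattice-free if it is an $n$-dimensional closed convex set with $\operatorname{int}(B)\cap\mathbb{Z}^n=\emptyset$; it is maximal lattice-free if it is not a proper subset of another lattice-free set. *)

(* Defs.v *)
From HB Require Import structures.
From mathcomp Require Import all_boot all_order all_algebra.
From mathcomp Require Import all_classical all_reals all_analysis.
Set Implicit Arguments. Unset Strict Implicit. Unset Printing Implicit Defensive.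
Import Order.TTheory GRing.Theory Num.Theory.
Import numFieldNormedType.Exports.
Local Open Scope classical_set_scope.
Local Open Scope ring_scope.

Section LatticeFree.
Variables (R : realType) (n : nat).
Notation vec := 'rV[R]_n.

Definition dotv (a x : vec) : R := \sum_(j < n) a ord0 j * x ord0 j.

Definition int_pt (x : vec) : Prop := forall j, x ord0 j \is a Num.int.

Definition convex (S : set vec) : Prop :=
  forall x y (t : R), S x -> S y -> 0 <= t <= 1 -> S ((1 - t) *: x + t *: y).

Definition aff_indep (d : nat) (p : 'I_d.+1 -> vec) : Prop :=
  row_free (\matrix_(i < d) (p (lift ord0 i) - p ord0)).

Definition affdim (S : set vec) (d : nat) : Prop :=
  (exists p : 'I_d.+1 -> vec, (forall i, S (p i)) /\ aff_indep p) /\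
  ~ (exists p : 'I_d.+2 -> vec, (forall i, S (p i)) /\ aff_indep p).

Definition aff_hull (S : set vec) : set vec :=
  [set y | exists k (p : 'I_k -> vec) (w : 'I_k -> R),
     (forall i, S (p i)) /\ \sum_(i < k) w i = 1 /\ y = \sum_(i < k) w i *: p i].

Definition relint (S : set vec) : set vec :=
  [set x | S x /\ exists e : R, 0 < e /\
     forall y, aff_hull S y -> `|y - x| < e -> S y].

Definition lattice_free (B : set vec) : Prop :=
  affdim B n /\ closed B /\ convex B /\ (forall x, int_pt x -> ~ (B°) x).

Definition maximal_lattice_free (B : set vec) : Prop :=
  lattice_free B /\ (forall K, lattice_free K -> B `<=` K -> K = B).

Definition polyhedron (B : set vec) : Prop :=
  exists (k : nat) (A : 'M[R]_(k, n)) (b : 'cV[R]_k),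
    B = [set x | forall i, \sum_(j < n) A i j * x ord0 j <= b i ord0].

Definition face (B F : set vec) : Prop :=
  exists (a : vec) (beta : R), (forall x, B x -> dotv a x <= beta) /\
    F = B `&` [set x | dotv a x = beta].

Definition facet (B F : set vec) : Prop :=
  face B F /\ exists d, affdim B d.+1 /\ affdim F d.

End LatticeFree.

(* Main.v *)
Require Import Defs.
From HB Require Import structures.
From mathcomp Require Import all_boot all_order all_algebra.
From mathcomp Require Import all_classical all_reals all_analysis.
From mathcomp Require Import ring lra.
Import Order.TTheory GRing.Theory Num.Theory.
Import numFieldNormedType.Exports.
Local Open Scope classical_set_scope.
Local Open Scope ring_scope.
Set Implicit Arguments. Unset Strict Implicit.
Section S.
Variables (R : realType) (n : nat).
Local Notation vec := 'rV[R]_n.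

Lemma dotvD (a x y : vec) : dotv a (x + y) = dotv a x + dotv a y.
Proof. by rewrite /dotv -big_split; apply: eq_bigr => j _; rewrite mxE mulrDr. Qed.

Lemma dotvZ (a x : vec) (s : R) : dotv a (s *: x) = s * dotv a x.
Proof. by rewrite /dotv mulr_sumr; apply: eq_bigr => j _; rewrite mxE mulrCA. Qed.

Lemma dotvN (a x : vec) : dotv a (- x) = - dotv a x.
Proof. by rewrite -scaleN1r dotvZ mulN1r. Qed.

Lemma dotvB (a x y : vec) : dotv a (x - y) = dotv a x - dotv a y.
Proof. by rewrite dotvD dotvN. Qed.

Lemma dotv_sum (a : vec) k (f : 'I_k -> vec) :
  dotv a (\sum_(i < k) f i) = \sum_(i < k) dotv a (f i).
Proof.
elim: k f => [|k IH] f; first by rewrite !big_ord0 /dotv big1 // => j _; rewrite mxE mulr0.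
by rewrite !big_ord_recr /= dotvD IH.
Qed.

Lemma dotv0 (a : vec) : dotv 0 a = 0.
Proof. by rewrite /dotv big1 // => j _; rewrite mxE mul0r. Qed.

Lemma dotvx0 (a : vec) : dotv a 0 = 0.
Proof. by rewrite /dotv big1 // => j _; rewrite mxE mulr0. Qed.

Lemma dotv_self0 (a : vec) : dotv a a <= 0 -> a = 0.
Proof.
move=> h.
have h0 : dotv a a = 0.
  by apply/eqP; rewrite eq_le h /dotv sumr_ge0 // => j _; rewrite -expr2 sqr_ge0.
apply/rowP => j; rewrite mxE.
have := h0; rewrite /dotv => /eqP; rewrite psumr_eq0; last by move=> i _; rewrite -expr2 sqr_ge0.
move=> /allP /(_ j (mem_index_enum j)) /=; rewrite mulf_eq0 orbb => /eqP ->.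
done.
Qed.

Lemma dotv_cont (a : vec) : continuous (dotv a).
Proof.
rewrite /dotv; apply: continuous_big; first exact: add_continuous.
move=> j _ x.
have h := @coord_continuous R 1 n ord0 j x.
have h2 := cvgMl_tmp (a := a ord0 j) h. exact: h2.
Qed.

Lemma int_max (B : set vec) a beta c :
  (forall x, B x -> dotv a x <= beta) -> (B°) c -> dotv a c = beta -> a = 0.
Proof.
move=> hle /nbhs_ballP [e e0 he] hc.
set d := e / (2 * (`|a| + 1)).
have d0 : 0 < d by rewrite divr_gt0 // mulr_gt0 // ltr_wpDl.
have : B (c + d *: a).
  apply: he; rewrite -ball_normE /ball_ /= opprD addNKr normrN normrZ gtr0_norm //.
  rewrite /d -mulrA gtr_pMr // ltr_pdivrMl ?mulr_gt0 ?ltr_wpDl // mulr1.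
  rewrite mulrDr mulr1 (mulr_natl _ 2) mulr2n -addrA ltr_pwDr ?ltr_wpDl //.
move/hle; rewrite dotvD dotvZ hc -lerBrDl subrr pmulr_rle0 //.
exact: dotv_self0.
Qed.

Lemma relint_face (F : set vec) z a beta :
  relint F z -> (forall x, F x -> dotv a x <= beta) -> dotv a z = beta ->
  forall y, F y -> dotv a y = beta.
Proof.
move=> [Fz [e [e0 he]]] hle hz y Fy.
have h1 := hle y Fy. apply/eqP; rewrite eq_le h1 /=.
set N := `|y - z|.
have N0 : 0 <= N := normr_ge0 _.
set d := e / (N + 1).
have d0 : 0 < d by rewrite divr_gt0 // ltr_wpDl.
pose y' := (1 + d) *: z - d *: y.
have : F y'.
  apply: he.
    exists 2%N, (fun i : 'I_2 => if val i == 0%N then z else y),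
      (fun i : 'I_2 => if val i == 0%N then 1 + d else - d).
    split; first by move=> i; case: ifP.
    by rewrite !big_ord_recl !big_ord0 /= !addr0 addrK scaleNr.
  rewrite /y' scalerDl scale1r.
  have -> : z + d *: z - d *: y - z = d *: (z - y) by rewrite scalerBr addrAC [z + _]addrC addrK.
  rewrite normrZ gtr0_norm //.
  rewrite -normrN opprB /d -/N mulrAC ltr_pdivrMr ?ltr_wpDl // mulrDr mulr1; lra.
move/hle; rewrite /y' dotvB !dotvZ hz => h.
have : d * (beta - dotv a y) <= 0 by lra.
by rewrite pmulr_rle0 // subr_le0.
Qed.

Definition ext k (p : 'I_k.+1 -> vec) (q : vec) : 'I_k.+2 -> vec :=
  fun i => if (val i < k.+1)%N then p (inord i) else q.


Lemma ext0 k (p : 'I_k.+1 -> vec) q : ext p q ord0 = p ord0.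
Proof. by rewrite /ext /=; congr p; apply: val_inj; rewrite /= inordK. Qed.

Lemma ext_last k (p : 'I_k.+1 -> vec) q : ext p q (lift ord0 ord_max) = q.
Proof. by rewrite /ext /= /bump /= ltnn. Qed.

Lemma ext_w k (p : 'I_k.+1 -> vec) q (i : 'I_k) :
  ext p q (lift ord0 (widen_ord (leqnSn k) i)) = p (lift ord0 i).
rewrite /ext /= /bump /= ?add1n ltnS ltn_ord; congr p; apply: val_inj.
rewrite /= inordK // ltnS; exact: ltn_ord.
Qed.

Lemma ext_in k (p : 'I_k.+1 -> vec) q (P : vec -> Prop) :
  (forall i, P (p i)) -> P q -> forall i, P (ext p q i).
Proof. by move=> hp hq i; rewrite /ext; case: ifP. Qed.

Lemma lift_indep k (p : 'I_k.+1 -> vec) q a beta :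
  aff_indep p -> (forall i, dotv a (p i) = beta) -> dotv a q != beta ->
  aff_indep (ext p q).
Proof.
move=> hp hpa hq; rewrite /aff_indep; apply: inj_row_free => u Hu.
rewrite mulmx_sum_row in Hu.
move: Hu; under eq_bigr do rewrite rowK; move=> Hu.
rewrite big_ord_recr /= ext_last ext0 in Hu.
move: Hu; under eq_bigr do rewrite ext_w; move=> Hu.
have hlast : u ord0 ord_max = 0.
  have := congr1 (dotv a) Hu.
  rewrite dotvD dotv_sum dotvZ dotvB big1; last first.
    by move=> i _; rewrite dotvZ dotvB !hpa subrr mulr0.
  rewrite add0r hpa dotvx0 => /eqP.
  by rewrite mulf_eq0 subr_eq0 (negbTE hq) orbF => /eqP.
rewrite hlast scale0r addr0 in Hu.
pose u' := \row_(i < k) u ord0 (widen_ord (leqnSn k) i).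
have : u' *m \matrix_(i < k) (p (lift ord0 i) - p ord0) == 0.
  rewrite mulmx_sum_row; apply/eqP; rewrite -[RHS]Hu; apply: eq_bigr => i _.
  by rewrite rowK mxE.
rewrite mulmx_free_eq0 // => /eqP hu'.
apply/rowP => j; rewrite mxE.
have [lt|ge] := ltnP j k.
  have -> : j = widen_ord (leqnSn k) (Ordinal lt) by apply: val_inj.
  by move: (congr1 (fun M : 'rV[R]_k => M ord0 (Ordinal lt)) hu'); rewrite /u' !mxE.
have -> : j = ord_max by apply: val_inj; apply/eqP; rewrite eqn_leq ge -ltnS ltn_ord.
exact: hlast.
Qed.


Lemma facet_eq (B Fi : set vec) a beta c :
  facet B Fi -> B c -> dotv a c != beta ->
  Fi `<=` [set x | dotv a x = beta] ->
  Fi = B `&` [set x | dotv a x = beta].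
Proof.
move=> [[ai [bi [hai hFi]]] [d [[_ hB] [[p [pF pind]] _]]]] Bc hc hsub.
apply/seteqP; split.
  move=> x Fx; split; last exact: hsub.
  by move: Fx; rewrite hFi => -[].
move=> y [By Hy].
apply: contrapT => nFy.
apply: hB.
have hyi : dotv ai y != bi.
  by apply/negP => /eqP h; apply: nFy; rewrite hFi; split.
have pH : forall i, dotv ai (p i) = bi by move=> i; have := pF i; rewrite hFi => -[].
have ind1 := lift_indep pind pH hyi.
have pH2 : forall i, dotv a (ext p y i) = beta.
  by apply: (@ext_in _ _ _ (fun x => dotv a x = beta)) => // i; apply: hsub.
have ind2 := lift_indep ind1 pH2 hc.
exists (ext (ext p y) c); split => //.
apply: (@ext_in _ _ _ B) => //; apply: (@ext_in _ _ _ B) => // i.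
by have := pF i; rewrite hFi => -[].
Qed.

Lemma row_dot k (A : 'M[R]_(k, n)) l (x : vec) :
  \sum_(j < n) A l j * x ord0 j = dotv (row l A) x.
Proof. by rewrite /dotv; apply: eq_bigr => j _; rewrite mxE. Qed.

Lemma int_poly k (A : 'M[R]_(k, n)) (b : 'cV[R]_k) (w : vec) :
  (forall l, row l A = 0 -> 0 <= b l ord0) ->
  (forall l, row l A != 0 -> dotv (row l A) w < b l ord0) ->
  ([set x : vec | forall l, \sum_(j < n) A l j * x ord0 j <= b l ord0]°) w.
Proof.
move=> h0 hlt.
have : \forall x \near w, forall l, (row l A != 0 -> dotv (row l A) x < b l ord0).
  have HH := @filter_forall _ _ (fun l x => row l A != 0 -> dotv (row l A) x < b l ord0) (nbhs w) _. apply: HH => l.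
  case: (eqVneq (row l A) 0) => [->|nz].
    by apply: nearW.
  have := cvgr_lt _ (@dotv_cont (row l A) w) _ (hlt l nz).
  have FF : Filter (nbhs w) by exact: nbhs_filter.
  by move=> H; exact: (filterS (fun x hx _ => hx) (H FF)).
apply: filterS => x hx l.
rewrite row_dot.
case: (eqVneq (row l A) 0) => [e|nz].
  by rewrite e dotv0; exact: h0.
exact: ltW (hx l nz).
Qed.
End S.

Theorem lemma6p1 (R : realType) (n m : nat) (B : set 'rV[R]_n) (c : 'rV[R]_n)
    (F : 'I_m -> set 'rV[R]_n) (z : 'I_m -> 'rV[R]_n) :
  polyhedron B -> maximal_lattice_free B ->
  injective F -> (forall i, facet B (F i)) ->
  (forall G, facet B G -> exists i, G = F i) ->
  (B°) c ->
  (forall i, int_pt (z i) /\ relint (F i) (z i)) ->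
  exists eps : R, 0 < eps < 1 /\
    forall i j : 'I_m, i != j ->
      exists t : R, 0 <= t <= 1 /\
        exists b, B b /\ (1 - t) *: z i + t *: z j = (1 - eps) *: b + eps *: c.
Proof.
move=> [k [A [b hB]]] _ injF hF _ hc hz.
have Bc : B c by exact: interior_subset.
have hBx : forall x, B x <-> forall l, dotv (row l A) x <= b l ord0.
  by move=> x; rewrite hB; split => h l; [rewrite -row_dot | rewrite row_dot]; exact: h.
have zB : forall i, F i (z i) by move=> i; exact: (hz i).2.1.
have FB : forall i, F i `<=` B.
  by move=> i x; case: (hF i) => [[a [be [_ ->]]] _] [].
have key : forall i j, i != j -> (B°) ((1 - 2^-1) *: z i + 2^-1 *: z j).
  move=> i j ij; rewrite hB; apply: int_poly.
    by move=> l hl; have := (hBx c).1 Bc l; rewrite hl dotv0.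
  move=> l nz; set a := row l A.
  rewrite ltNge; apply/negP => hge.
  have hzi := (hBx _).1 (FB i _ (zB i)) l.
  have hzj := (hBx _).1 (FB j _ (zB j)) l.
  rewrite dotvD !dotvZ in hge.
  have ei : dotv a (z i) = b l ord0 by rewrite -/a in hzi hzj; lra.
  have ej : dotv a (z j) = b l ord0 by rewrite -/a in hzi hzj; lra.
  have hc' : dotv a c != b l ord0.
    apply/eqP => e; move/eqP: nz; apply.
    exact: (int_max (fun x Bx => (hBx x).1 Bx l) hc e).
  have subi : F i `<=` [set x | dotv a x = b l ord0].
    by move=> y Fy; apply: (relint_face (hz i).2 _ ei) => // x Fx; exact: (hBx x).1 (FB i x Fx) l.
  have subj : F j `<=` [set x | dotv a x = b l ord0].
    by move=> y Fy; apply: (relint_face (hz j).2 _ ej) => // x Fx; exact: (hBx x).1 (FB j x Fx) l.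
  have Ei := facet_eq (hF i) Bc hc' subi.
  have Ej := facet_eq (hF j) Bc hc' subj.
  by move/eqP: ij; apply; apply: injF; rewrite Ei Ej.
have pair : forall i j, i != j -> \forall e \near 0^'+,
    exists t : R, 0 <= t <= 1 /\
        exists b, B b /\ (1 - t) *: z i + t *: z j = (1 - e) *: b + e *: c.
  move=> i j ij; have := key i j ij.
  set w := (1 - 2^-1) *: z i + 2^-1 *: z j.
  move=> /nbhs_ballP [r r0 hr].
  set N := `|c - w|.
  have N0 : 0 <= N := normr_ge0 _.
  near=> e.
  have e0 : 0 < e by near: e; exact: nbhs_right_gt.
  have e1 : e < 2^-1 by near: e; apply: nbhs_right_lt; rewrite invr_gt0 ltr0n.
  have e2 : e < r / (2 * (N + 1)).
    by near: e; apply: nbhs_right_lt; rewrite divr_gt0 // mulr_gt0 // ltr_wpDl.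
  have ne : 1 - e != 0 by rewrite subr_eq0 eq_sym; apply/negP => /eqP ee; move: e1; rewrite ee; lra.
  exists 2^-1; split; first by apply/andP; split; lra.
  exists ((1 - e)^-1 *: (w - e *: c)); split.
    apply: hr; rewrite -ball_normE /ball_ /=.
    have -> : w - (1 - e)^-1 *: (w - e *: c) = ((1 - e)^-1 * e) *: (c - w).
      by apply/rowP => jj; rewrite !mxE; field.
    rewrite normrZ ger0_norm; last by rewrite mulr_ge0 // ?invr_ge0; lra.
    have hinv : (1 - e)^-1 <= 2.
      by rewrite -[(1 - e)^-1]mul1r ler_pdivrMr; lra.
    have e3 : e * (2 * (N + 1)) < r by rewrite -ltr_pdivlMr // mulr_gt0 // ltr_wpDl.
    have eN : 0 <= e * N by rewrite mulr_ge0 //; lra.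
    rewrite -/N; nra.
  by rewrite scalerA mulfV // scale1r subrK.
have Fr : Filter (0 : R)^'+ by exact: at_right_proper_filter.
have hall : \forall e \near (0 : R)^'+, forall p : ('I_m * 'I_m)%type,
    p.1 != p.2 -> exists t : R, 0 <= t <= 1 /\
        exists b, B b /\ (1 - t) *: z p.1 + t *: z p.2 = (1 - e) *: b + e *: c.
  apply: (@filter_forall _ _ (fun p e => p.1 != p.2 -> exists t : R, 0 <= t <= 1 /\
        exists b, B b /\ (1 - t) *: z p.1 + t *: z p.2 = (1 - e) *: b + e *: c) _ Fr) => p.
  case: (eqVneq p.1 p.2) => [->|pne].
    by apply: nearW.
  exact: (filterS (fun e h _ => h) (pair _ _ pne)).
have [e [he [e0 e1]]] := filter_ex (filterI hall (filterI (nbhs_right_gt 0) (nbhs_right_lt (@ltr01 R)))).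
exists e; split; first by rewrite e0 e1.
by move=> i j ij; exact: (he (i, j) ij).
Unshelve. all: by end_near.
Qed.
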